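(* Let $t\in\mathbb{N}$ and let $F(x)=\mathrm{sign}(w\cdot x-\theta)$ be an LTF over $\{-1,1\}^n$ with every $w_i$ an integer in $\{-t,\dots,t\}$. Then for every $s\in\mathbb{N}$, either $w$ has at most $s$ nonzero coordinates, or the normalized vector $u=w/\|w\|_2$ satisfies $\sum_{i=1}^n u_i^4\le t^2/(s+1)$; i.e. $F$ is either $s$-sparse or $(t/\sqrt{s+1})$-regular.
   Context: $\mathrm{sign}(z)=1$ if $z>0$ and $-1$ otherwise. An LTF is $s$-sparse if its weight vector has at most $s$ nonzero entries. A unit vector $u$ is $\tau$-regular if $\sum_i u_i^4\le\tau^2$; an LTF is $\tau$-regular if it can be written $\mathrm{sign}(u\cdot x-\theta')$ with $\|u\|_2=1$ and $u$ $\tau$-regular. *)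

(* Defs.v *)
From mathcomp Require Import all_boot all_order all_algebra.
From mathcomp Require Import reals.
Set Implicit Arguments. Unset Strict Implicit. Unset Printing Implicit Defensive.
Import Order.TTheory GRing.Theory Num.Theory.
Local Open Scope ring_scope.

Definition sgn {R : realType} (z : R) : R := if 0 < z then 1 else -1.

(* the LTF x |-> sign(w . x - theta) on {-1,1}^n, points given as bool vectors
   (true ↦ 1, false ↦ -1) *)
Definition pm1 {R : realType} (b : bool) : R := if b then 1 else -1.
Definition ltf {R : realType} (n : nat) (w : 'I_n -> R) (theta : R)
  (x : 'I_n -> bool) : R :=
  sgn (\sum_(i < n) w i * pm1 (x i) - theta).

Definition nnz {R : realType} (n : nat) (w : 'I_n -> R) : nat :=
  #|[set i : 'I_n | w i != 0]|.

Definition l2norm {R : realType} (n : nat) (w : 'I_n -> R) : R :=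
  Num.sqrt (\sum_(i < n) w i ^+ 2).

Definition normalize {R : realType} (n : nat) (w : 'I_n -> R) : 'I_n -> R :=
  fun i => w i / l2norm w.

Definition regular_vec {R : realType} (n : nat) (u : 'I_n -> R) (tau : R) : Prop :=
  \sum_(i < n) u i ^+ 4 <= tau ^+ 2.

(* Main.v *)
Require Import Defs.
From mathcomp Require Import all_boot all_order all_algebra.
From mathcomp Require Import reals.
Import Order.TTheory GRing.Theory Num.Theory.
Local Open Scope ring_scope.

Lemma aux_sq : forall (R : realType) (z : int) (t:nat), 1 <= `|z| -> `|z| <= t%:Z -> (1 : R) <= z%:~R ^+ 2 /\ (z%:~R : R)^+2 <= t%:R ^+2.
move=> R z t h1 h2.
have e1 : z ^+ 2 = `|z| ^+ 2 by rewrite real_normK ?num_real.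
split.
  rewrite -rmorphXn /= ler1z e1.
  by rewrite -[1](expr1n _ 2) lerXn2r ?nnegrE ?ler01 ?normr_ge0.
rewrite -[t%:R]/((t%:Z)%:~R : R) -!rmorphXn /= ler_int e1.
rewrite -[X in _ <= X]/((t%:Z) ^+ 2) !expr2.
by apply: ler_pM => //; apply: normr_ge0.
Qed.

Theorem mainTheorem3 (R : realType) (n t : nat) (w : 'I_n -> int) (theta : R)
  (F : ('I_n -> bool) -> R)
  (hF : F = ltf (fun i => (w i)%:~R) theta)
  (hw : forall i, `|w i| <= t%:Z) :
  forall s : nat,
    (nnz (fun i => (w i)%:~R : R) <= s)%N \/
    \sum_(i < n) (normalize (fun i => (w i)%:~R : R) i) ^+ 4
      <= (t%:R) ^+ 2 / (s.+1)%:R.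
Proof.
move=> s.
set W := (fun i => (w i)%:~R : R).
case: (leqP (nnz W) s) => hk; [by left | right].
set S := \sum_(i < n) W i ^+ 2.
set A := [set i : 'I_n | W i != 0].
have hkA : nnz W = #|A| by [].
have Wsq1 : forall i, i \in A -> 1 <= W i ^+ 2.
  move=> i; rewrite inE /W intr_eq0 => hi.
  have h1 : 1 <= `|w i| by rewrite -gtz0_ge1 normr_gt0.
  by case: (aux_sq R (w i) t h1 (hw i)).
have hS : (#|A|%:R : R) <= S.
  rewrite /S (bigID (fun i => i \in A)) /=.
  apply: (@le_trans _ _ (\sum_(i < n | i \in A) W i ^+ 2 + 0)); last first.
    by rewrite lerD2l sumr_ge0 // => i _; rewrite sqr_ge0.
  rewrite addr0 -sum1_card natr_sum.
  by apply: ler_sum => i hi; apply: Wsq1.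
have Spos : 0 < S.
  apply: lt_le_trans hS; rewrite ltr0n; rewrite -hkA; by apply: leq_ltn_trans hk.
have Wt : forall i, W i ^+ 2 <= t%:R ^+ 2.
  move=> i; rewrite /W; have [-> | hi] := eqVneq (w i) 0.
    by rewrite expr0n /= exprn_ge0 ?ler0n.
  have h1 : 1 <= `|w i| by rewrite -gtz0_ge1 normr_gt0.
  by case: (aux_sq R (w i) t h1 (hw i)).
have hsum : \sum_(i < n) normalize W i ^+ 4 = (\sum_(i < n) W i ^+ 4) / S ^+ 2.
  rewrite mulr_suml; apply: eq_bigr => i _.
  rewrite /normalize /l2norm -/S expr_div_n.
  by rewrite (_ : 4 = 2 * 2)%N // !exprM sqr_sqrtr // ltW.
rewrite hsum.
apply: (@le_trans _ _ (t%:R ^+ 2 * S / S ^+ 2)).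
  apply: ler_wpM2r; first by rewrite invr_ge0 exprn_ge0 // ltW.
  rewrite /S mulr_sumr; apply: ler_sum => i _.
  rewrite (_ : 4 = 2 + 2)%N // exprD; apply: ler_wpM2r; [exact: sqr_ge0 | exact: Wt].
rewrite expr2 invfM mulrA mulfK ?gt_eqF //.
apply: ler_wpM2l; first by apply: sqr_ge0.
rewrite lef_pV2 ?posrE ?ltr0n //.
apply: le_trans hS; rewrite ler_nat -hkA //.
Qed.
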